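(* Let $v$ be the last installed view in the system, i.e., $lastview=v$. If a correct server $s$ requests to change view $v$ to view $v.succ$, then at least a weighted majority of correct servers, including $s$, eventually install $v.succ$.
   Context: System: servers $S=\{s_1,\dots,s_n\}$; reliable links, message passing; asynchronous; crash failures only (a server is correct if it does not crash); at most $f$ servers crash and $2f+1\le n$. Views form a sequence $v_0,v_1,\dots$ with $v_{k+1}=v_k.succ$; $v<w$ means $w$ is obtained from $v$ by applying $succ$ one or more times. Each server $s$ has a current view $s.cview$ (initially $v_0$) and a weight in each view; in every view each server's weight is strictly between $\mathbb{wl}=n/(2(n-f))$ and $\mathbb{wu}=n/(2f)$ and the total weight is at most $n$. A weighted majority for view $v$ is a set of servers whose weights in $v$ sum to more than $n/2$. View changer run by each server $s$ with $s.cview=v$: when a local timeout for $v$ expires it requests the change by sending $\langle\text{change\_view},v.succ\rangle$ to all servers; once it has received or sent change\_view for $v.succ$ it forwards it if not already sent, disables read/write operations, sends $\langle\text{state\_update},(val,ts,cid),v,w\rangle$ to all servers (its register state and weight $w$ in $v$) — at this point it has uninstalled $v$ — waits until it has state\_update messages for view $v$ whose weights sum to more than $n/2$, adopts the value with lexicographically largest $(ts,cid)$, then sets $s.cview\leftarrow v.succ$ (installs $v.succ$) and re-enables read/write operations. A view $v$ is installed in the system once at least one server installs $v$ and every server $s$ satisfies $s.cview\le v$; $lastview$ denotes the last view installed in the system. *)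

(* Defs.v *)
From HB Require Import structures.
From mathcomp Require Import all_boot all_order all_algebra.
Set Implicit Arguments. Unset Strict Implicit. Unset Printing Implicit Defensive.
Import Order.TTheory GRing.Theory Num.Theory.
Local Open Scope ring_scope.

(* Views: v_k is represented by k : nat, v.succ = v.+1, v_0 = 0. *)
(* Register state: (val, ts, cid). *)
Definition regst (Val : Type) := (Val * nat * nat)%type.

Definition lex_le (Val : Type) (x y : regst Val) : bool :=
  (x.1.2 < y.1.2)%N || ((x.1.2 == y.1.2) && (x.2 <= y.2)%N).

Inductive msg (Val R : Type) :=
| ChangeView (v : nat)
| StateUpdate (x : regst Val) (v : nat) (wt : R).
Arguments ChangeView {Val R} v.
Arguments StateUpdate {Val R} x v wt.

Record lstate (Val : Type) := LState {
  cview   : nat;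
  reg     : regst Val;
  sentcv  : nat -> bool;
  uninst  : bool;         (* has uninstalled cview (sent state_update);
                             read/write operations disabled *)
  crashed : bool }.
Arguments LState {Val} cview reg sentcv uninst crashed.

Record gstate (Val R : Type) (n : nat) := GState {
  loc  : 'I_n -> lstate Val;
  (* net p q m : message m has been sent by p to q *)
  net  : 'I_n -> 'I_n -> msg Val R -> Prop;
  (* rcvd q p m : q has received message m from p *)
  rcvd : 'I_n -> 'I_n -> msg Val R -> Prop }.
Arguments GState {Val R n} loc net rcvd.

Inductive label (n : nat) :=
| Timeout of 'I_n     (* local timeout for cview expires: request change *)
| Uninstall of 'I_n
| Install of 'I_n
| Op of 'I_n          (* abstract read/write operation touching the register *)
| Deliver of 'I_n & 'I_n   (* Deliver q p : deliver some message from p to q *)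
| Crash of 'I_n
| Skip.

Section Model.
Variables (R : realFieldType) (Val : Type) (val0 : Val) (n f : nat).
Variable w : nat -> 'I_n -> R.   (* w v i : weight of server i in view v *)

Local Notation gst := (gstate Val R n).

Definition init_state : gst :=
  GState (fun _ => LState 0%N (val0, 0%N, 0%N) (fun _ => false) false false)
         (fun _ _ _ => False) (fun _ _ _ => False).

Definition upd_loc (g : gst) (s : 'I_n) (ls : lstate Val) : 'I_n -> lstate Val :=
  fun i => if i == s then ls else loc g i.

Definition send_all (N : 'I_n -> 'I_n -> msg Val R -> Prop) (s : 'I_n)
  (m : msg Val R) : 'I_n -> 'I_n -> msg Val R -> Prop :=
  fun p q x => N p q x \/ (p = s /\ x = m).

Definition step (g : gst) (l : label n) (g' : gst) : Prop :=
  match l with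
  | Timeout s =>
      let ls := loc g s in
      ~~ crashed ls /\ ~~ sentcv ls (cview ls).+1 /\
      g' = GState (upd_loc g s (LState (cview ls) (reg ls)
                     (fun k => (k == (cview ls).+1) || sentcv ls k)
                     (uninst ls) (crashed ls)))
                  (send_all (net g) s (ChangeView (cview ls).+1))
                  (rcvd g)
  | Uninstall s =>
      let ls := loc g s in
      ~~ crashed ls /\ ~~ uninst ls /\
      (sentcv ls (cview ls).+1 \/ exists p, rcvd g s p (ChangeView (cview ls).+1)) /\
      g' = GState (upd_loc g s (LState (cview ls) (reg ls)
                     (fun k => (k == (cview ls).+1) || sentcv ls k)
                     true (crashed ls)))
                  (send_all (send_all (net g) s (ChangeView (cview ls).+1)) s
                     (StateUpdate (reg ls) (cview ls) (w (cview ls) s)))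
                  (rcvd g)
  | Install s =>
      let ls := loc g s in
      ~~ crashed ls /\ uninst ls /\
      exists (Q : {set 'I_n}) (ws : 'I_n -> R) (x : regst Val),
        (forall i, i \in Q -> exists y, rcvd g s i (StateUpdate y (cview ls) (ws i))) /\
        n%:R / 2 < \sum_(i in Q) ws i /\
        (exists i, i \in Q /\ rcvd g s i (StateUpdate x (cview ls) (ws i))) /\
        (forall i y, i \in Q -> rcvd g s i (StateUpdate y (cview ls) (ws i)) ->
           lex_le y x) /\
        g' = GState (upd_loc g s (LState (cview ls).+1 x (sentcv ls) false (crashed ls)))
                    (net g) (rcvd g)
  | Op s =>
      let ls := loc g s in
      ~~ crashed ls /\ ~~ uninst ls /\
      exists x : regst Val,
        g' = GState (upd_loc g s (LState (cview ls) x (sentcv ls) (uninst ls) (crashed ls)))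
                    (net g) (rcvd g)
  | Deliver q p =>
      ~~ crashed (loc g q) /\
      exists m, net g p q m /\ ~ rcvd g q p m /\
        g' = GState (loc g) (net g)
               (fun q' p' m' => rcvd g q' p' m' \/ (q' = q /\ p' = p /\ m' = m))
  | Crash s =>
      let ls := loc g s in
      ~~ crashed ls /\
      g' = GState (upd_loc g s (LState (cview ls) (reg ls) (sentcv ls) (uninst ls) true))
                  (net g) (rcvd g)
  | Skip => g' = g
  end.

Definition enabled (g : gst) (l : label n) : Prop := exists g', step g l g'.

Definition correct (r : nat -> gst) (s : 'I_n) : Prop :=
  forall t, ~~ crashed (loc (r t) s).

Definition admissible_run (r : nat -> gst) (lab : nat -> label n) : Prop :=
  r 0%N = init_state /\
  (forall t, step (r t) (lab t) (r t.+1)) /\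
  (forall t, (#|[set i | crashed (loc (r t) i)]| <= f)%N) /\
  (forall t p q m, correct r q -> net (r t) p q m -> exists t', rcvd (r t') q p m) /\
  (forall s, correct r s -> forall t,
     (forall t', (t <= t')%N -> enabled (r t') (Uninstall s)) ->
     exists t', (t <= t')%N /\ lab t' = Uninstall s) /\
  (forall s, correct r s -> forall t,
     (forall t', (t <= t')%N -> enabled (r t') (Install s)) ->
     exists t', (t <= t')%N /\ lab t' = Install s).

(* weight constraints: wl < w v i < wu with wl = n/(2(n-f)), wu = n/(2f),
   written multiplicatively; total weight at most n *)
Definition weights_ok : Prop :=
  (forall v i, n%:R < w v i * (2 * (n - f))%:R /\ w v i * (2 * f)%:R < n%:R) /\
  (forall v, \sum_(i < n) w v i <= n%:R).

Definition weighted_majority (v : nat) (Q : {set 'I_n}) : Prop :=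
  n%:R / 2 < \sum_(i in Q) w v i.

Definition installed_in_system (g : gst) (v : nat) : Prop :=
  (exists s, cview (loc g s) = v) /\ (forall s, (cview (loc g s) <= v)%N).

(* lastview = v : the last view installed in the system (unique when it exists) *)
Definition lastview_is (g : gst) (v : nat) : Prop := installed_in_system g v.

Definition requests (r : nat -> gst) (lab : nat -> label n) (t : nat)
  (s : 'I_n) (v : nat) : Prop :=
  lab t = Timeout s /\ cview (loc (r t) s) = v.

End Model.

(* Main.v *)
Require Import Defs.
From HB Require Import structures.
From mathcomp Require Import all_boot all_order all_algebra.
From Stdlib Require Import Classical ClassicalEpsilon.
From mathcomp Require Import zify ring lra.
Import Order.TTheory GRing.Theory Num.Theory.
Local Open Scope ring_scope.

Definition past {Val : Type} (ls : lstate Val) (k : nat) : Prop :=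
  (k < cview ls)%N \/ (k = cview ls /\ uninst ls).

Definition Inv {R : realFieldType} {Val : Type} {n : nat} (w : nat -> 'I_n -> R)
  (g : gstate Val R n) : Prop :=
  (forall p k, past (loc g p) k -> exists y, forall q, net g p q (StateUpdate y k (w k p))) /\
  (forall p k, (k < cview (loc g p))%N -> sentcv (loc g p) k.+1) /\
  (forall p, uninst (loc g p) -> sentcv (loc g p) (cview (loc g p)).+1) /\
  (forall p k, sentcv (loc g p) k -> forall q, net g p q (ChangeView k)) /\
  (forall p q y k wt, net g p q (StateUpdate y k wt) -> past (loc g p) k) /\
  (forall p q q' y y' k wt wt', net g p q (StateUpdate y k wt) ->
       net g p q' (StateUpdate y' k wt') -> y = y') /\
  (forall q p m, rcvd g q p m -> net g p q m).

Lemma Inv_init (R : realFieldType) (Val : Type) (val0 : Val) (n : nat) (w : nat -> 'I_n -> R) :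
  Inv w (init_state R val0 n).
Proof.
rewrite /Inv /init_state /past /=.
split; first by move=> p k [//|[_]].
split; first by [].
split; first by [].
split; first by [].
split; first by move=> p q y k wt.
split; first by [].
by [].
Qed.

Lemma upd_locE (R : realFieldType) (Val : Type) (n : nat) (g : gstate Val R n) s ls p :
  upd_loc g s ls p = if p == s then ls else loc g p.
Proof. by []. Qed.

Ltac U := rewrite /= ?upd_locE; try rewrite eqxx;
  try match goal with H : (_ == _) = false |- _ => rewrite H end; simpl.

Lemma Inv_step (R : realFieldType) (Val : Type) (n : nat) (w : nat -> 'I_n -> R)
  (g g' : gstate Val R n) l :
  Inv w g -> step w g l g' -> Inv w g'.
Proof.
move=> [H1 [H2 [H3 [H4 [H5 [H6 H7]]]]]].
case: l => [s|s|s|s|q0 p0|s|] /=.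
-
  move=> [_ [_ ->]]; rewrite /Inv /=.
  do !split.
  + move=> p k; case: (p =P s) => [Hps|/eqP/negbTE Hne]; [subst p|]; U; move=> Hp;
      have [y Hy] := H1 _ _ Hp; exists y => q; left; exact: Hy.
  + move=> p k; case: (p =P s) => [Hps|/eqP/negbTE Hne]; [subst p|]; U; move=> Hp; last exact: H2.
    by rewrite H2 ?orbT.
  + move=> p; case: (p =P s) => [Hps|/eqP/negbTE Hne]; [subst p|]; U; move=> Hp; last exact: H3.
    by rewrite H3 ?orbT.
  + move=> p k; case: (p =P s) => [Hps|/eqP/negbTE Hne]; [subst p|]; U; move=> Hp q; last by left; apply: H4.
    case/orP: Hp => [/eqP ->|Hp]; first by right.
    by left; apply: H4.
  + move=> p q y k wt [Hm|[_ //]].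
    case: (p =P s) => [Hps|/eqP/negbTE Hne]; [subst p|]; U; last exact: H5 Hm.
    exact: H5 Hm.
  + by move=> p q q' y y' k wt wt' [Hm|[_ //]] [Hm'|[_ //]]; apply: H6 Hm Hm'.
  + by move=> q p m /H7 Hm; left.
-
  move=> [_ [Hun [Hcv ->]]]; rewrite /Inv /=.
  do !split.
  + move=> p k; case: (p =P s) => [Hps|/eqP/negbTE Hne]; [subst p|]; U; move=> Hp; last first.
      have [y Hy] := H1 _ _ Hp; exists y => q; left; left; exact: Hy.
    case: Hp => [Hlt|[-> _]].
      have [y Hy] := H1 s k (or_introl Hlt); exists y => q; left; left; exact: Hy.
    by exists (reg (loc g s)) => q; right.
  + move=> p k; case: (p =P s) => [Hps|/eqP/negbTE Hne]; [subst p|]; U; move=> Hp; last exact: H2.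
    by rewrite H2 ?orbT.
  + move=> p; case: (p =P s) => [Hps|/eqP/negbTE Hne]; [subst p|]; U; move=> Hp; last exact: H3.
    by rewrite eqxx.
  + move=> p k; case: (p =P s) => [Hps|/eqP/negbTE Hne]; [subst p|]; U; move=> Hp q; last by left; left; apply: H4.
    case/orP: Hp => [/eqP ->|Hp]; first by left; right.
    by left; left; apply: H4.
  + move=> p q y k wt [[Hm|[_ //]]|[-> [] _ <- _]].
      case: (p =P s) => [Hps|/eqP/negbTE Hne]; [subst p|]; U; last exact: H5 Hm.
      have := H5 _ _ _ _ _ Hm; rewrite /past => -[Hl|[-> _]]; first by left.
      by right.
    by rewrite upd_locE eqxx /=; right.
  + move=> p q q' y y' k wt wt' [[Hm|[_ //]]|[Hp [] Hy Hk _]] [[Hm'|[_ //]]|[Hp' [] Hy' Hk' _]].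
    * exact: H6 Hm Hm'.
    * subst; have := H5 _ _ _ _ _ Hm; rewrite /past ltnn.
      by move=> [//|[_ Hu]]; rewrite Hu in Hun.
    * subst; have := H5 _ _ _ _ _ Hm'; rewrite /past ltnn.
      by move=> [//|[_ Hu]]; rewrite Hu in Hun.
    * by subst.
  + by move=> q p m /H7 Hm; left; left.
-
  move=> [_ [Hun [Q [ws [x [_ [_ [_ [_ ->]]]]]]]]]; rewrite /Inv /=.
  do !split.
  + move=> p k; case: (p =P s) => [Hps|/eqP/negbTE Hne]; [subst p|]; U; move=> Hp; last exact: H1.
    apply: H1; rewrite /past; case: Hp => [|[_ //]].
    rewrite ltnS leq_eqVlt => /orP [/eqP ->|]; [by right|by left].
  + move=> p k; case: (p =P s) => [Hps|/eqP/negbTE Hne]; [subst p|]; U; move=> Hp; last exact: H2.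
    move: Hp; rewrite ltnS leq_eqVlt => /orP [/eqP ->|]; [exact: H3|exact: H2].
  + move=> p; case: (p =P s) => [Hps|/eqP/negbTE Hne]; [subst p|]; U; move=> Hp; last exact: H3.
    by [].
  + move=> p k; case: (p =P s) => [Hps|/eqP/negbTE Hne]; [subst p|]; U; move=> Hp; exact: H4.
  + move=> p q y k wt Hm.
    case: (p =P s) => [Hps|/eqP/negbTE Hne]; [subst p|]; U; last exact: H5 Hm.
    have := H5 _ _ _ _ _ Hm; rewrite /past => -[Hl|[-> _]]; left => //.
    exact: ltnW.
  + exact: H6.
  + exact: H7.
-
  move=> [_ [_ [x ->]]]; rewrite /Inv /=.
  do !split.
  + move=> p k; case: (p =P s) => [Hps|/eqP/negbTE Hne]; [subst p|]; U; move=> Hp; exact: H1.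
  + move=> p k; case: (p =P s) => [Hps|/eqP/negbTE Hne]; [subst p|]; U; move=> Hp; exact: H2.
  + move=> p; case: (p =P s) => [Hps|/eqP/negbTE Hne]; [subst p|]; U; move=> Hp; exact: H3.
  + move=> p k; case: (p =P s) => [Hps|/eqP/negbTE Hne]; [subst p|]; U; move=> Hp; exact: H4.
  + move=> p q y k wt Hm.
    case: (p =P s) => [Hps|/eqP/negbTE Hne]; [subst p|]; U; exact: H5 Hm.
  + exact: H6.
  + exact: H7.
-
  move=> [_ [m [Hm [_ ->]]]]; rewrite /Inv /=.
  do !split => //.
  by move=> q p m' [/H7 //|[-> [-> ->]]].
-
  move=> [_ ->]; rewrite /Inv /=.
  do !split.
  + move=> p k; case: (p =P s) => [Hps|/eqP/negbTE Hne]; [subst p|]; U; move=> Hp; exact: H1.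
  + move=> p k; case: (p =P s) => [Hps|/eqP/negbTE Hne]; [subst p|]; U; move=> Hp; exact: H2.
  + move=> p; case: (p =P s) => [Hps|/eqP/negbTE Hne]; [subst p|]; U; move=> Hp; exact: H3.
  + move=> p k; case: (p =P s) => [Hps|/eqP/negbTE Hne]; [subst p|]; U; move=> Hp; exact: H4.
  + move=> p q y k wt Hm.
    case: (p =P s) => [Hps|/eqP/negbTE Hne]; [subst p|]; U; exact: H5 Hm.
  + exact: H6.
  + exact: H7.
- by move=> ->.
Qed.

Lemma step_loc (R : realFieldType) (Val : Type) (n : nat) (w : nat -> 'I_n -> R)
  (g g' : gstate Val R n) l i :
  step w g l g' ->
  [/\ (cview (loc g i) <= cview (loc g' i) <= (cview (loc g i)).+1)%N,
      crashed (loc g i) -> crashed (loc g' i),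
      (uninst (loc g i) -> cview (loc g' i) = cview (loc g i) -> uninst (loc g' i)),
      (forall q p m, rcvd g q p m -> rcvd g' q p m) &
      (forall p q m, net g p q m -> net g' p q m)].
Proof.
case: l => [s|s|s|s|q0 p0|s|] /=.
- move=> [_ [_ ->]] /=; case: (i =P s) => [Hps|/eqP/negbTE Hne]; [subst i|]; U;
  rewrite ?leqnn ?leqnSn; split => //; by move=> *; left.
- move=> [_ [_ [_ ->]]] /=; case: (i =P s) => [Hps|/eqP/negbTE Hne]; [subst i|]; U;
  rewrite ?leqnn ?leqnSn; split => //; by move=> *; left; left.
- move=> [_ [_ [Q [ws [x [_ [_ [_ [_ ->]]]]]]]]] /=;
  case: (i =P s) => [Hps|/eqP/negbTE Hne]; [subst i|]; U;
  rewrite ?leqnn ?leqnSn ?leqW //; split => //.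
  by move=> _ /esym/n_Sn.
- move=> [_ [_ [x ->]]] /=; case: (i =P s) => [Hps|/eqP/negbTE Hne]; [subst i|]; U;
  rewrite ?leqnn ?leqnSn; split => //.
- move=> [_ [m [_ [_ ->]]]] /=; rewrite ?leqnn ?leqnSn; split => //.
  by move=> *; left.
- move=> [_ ->] /=; case: (i =P s) => [Hps|/eqP/negbTE Hne]; [subst i|]; U;
  rewrite ?leqnn ?leqnSn; split => //.
- by move=> ->; rewrite leqnn leqnSn.
Qed.


Lemma run_inv (R : realFieldType) (Val : Type) (val0 : Val) (n : nat) (w : nat -> 'I_n -> R)
  (r : nat -> gstate Val R n) (lab : nat -> label n) :
  r 0%N = init_state R val0 n -> (forall t, step w (r t) (lab t) (r t.+1)) ->
  forall t, Inv w (r t).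
Proof.
move=> H0 Hst; elim=> [|t IH]; first by rewrite H0; apply: Inv_init.
exact: Inv_step IH (Hst t).
Qed.

Lemma run_mono (R : realFieldType) (Val : Type) (n : nat) (w : nat -> 'I_n -> R)
  (r : nat -> gstate Val R n) (lab : nat -> label n) :
  (forall t, step w (r t) (lab t) (r t.+1)) ->
  forall i t t', (t <= t')%N ->
  [/\ (cview (loc (r t) i) <= cview (loc (r t') i))%N,
      crashed (loc (r t) i) -> crashed (loc (r t') i),
      (forall q p m, rcvd (r t) q p m -> rcvd (r t') q p m) &
      (forall p q m, net (r t) p q m -> net (r t') p q m)].
Proof.
move=> Hst i t t' /subnKC <-; elim: (t' - t)%N => [|d [IH1 IH2 IH3 IH4]].
  by rewrite addn0 leqnn; split.
have [/andP [A1 _] A2 _ A3 A4] := @step_loc _ _ _ _ _ _ _ i (Hst (t + d)%N).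
rewrite addnS; split.
- exact: leq_trans IH1 A1.
- by move=> /IH2 /A2.
- by move=> q p m /IH3 /A3.
- by move=> p q m /IH4 /A4.
Qed.

Lemma run_past (R : realFieldType) (Val : Type) (n : nat) (w : nat -> 'I_n -> R)
  (r : nat -> gstate Val R n) (lab : nat -> label n) :
  (forall t, step w (r t) (lab t) (r t.+1)) ->
  forall i k t t', (t <= t')%N -> past (loc (r t) i) k -> past (loc (r t') i) k.
Proof.
move=> Hst i k t t' /subnKC <-; elim: (t' - t)%N => [|d IH]; first by rewrite addn0.
move=> /IH; rewrite addnS.
have [/andP [A1 A1'] _ A2 _ _] := @step_loc _ _ _ _ _ _ _ i (Hst (t + d)%N).
rewrite /past => -[Hl|[Hk Hu]]; first by left; exact: leq_trans Hl A1.
case: (ltngtP (cview (loc (r (t + d)%N) i)) (cview (loc (r (t + d).+1) i))) => Hc.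
- by left; rewrite Hk.
- by move: (leq_trans Hc A1); rewrite ltnn.
- by right; split; [rewrite -Hc|apply: A2].
Qed.

Lemma run_hit (R : realFieldType) (Val : Type) (n : nat) (w : nat -> 'I_n -> R)
  (r : nat -> gstate Val R n) (lab : nat -> label n) :
  (forall t, step w (r t) (lab t) (r t.+1)) ->
  forall i v t T, (cview (loc (r t) i) <= v)%N -> (v < cview (loc (r T) i))%N ->
  exists t', (t <= t')%N /\ cview (loc (r t') i) = v.+1.
Proof.
move=> Hst i v t T Ht HT.
have HtT : (t <= T)%N.
  rewrite leqNgt; apply/negP => /ltnW HTt.
  have [A _ _ _] := @run_mono _ _ _ _ _ _ Hst i _ _ HTt.
  by move: (leq_ltn_trans (leq_trans A Ht) HT); rewrite ltnn.
move: HT; rewrite -(subnKC HtT); elim: (T - t)%N => [|d IH].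
  by rewrite addn0 => HT0; move: (leq_ltn_trans Ht HT0); rewrite ltnn.
rewrite addnS => HT.
case: (ltnP v (cview (loc (r (t + d)%N) i))) => Hv; first exact: IH.
have [/andP [_ A1] _ _ _ _] := @step_loc _ _ _ _ _ _ _ i (Hst (t + d)%N).
exists (t + d).+1; split; first by rewrite -addnS leq_addr.
apply/eqP; rewrite eqn_leq HT andbT.
exact: leq_trans A1 _.
Qed.

Lemma run_uninst (R : realFieldType) (Val : Type) (n : nat) (w : nat -> 'I_n -> R)
  (r : nat -> gstate Val R n) (lab : nat -> label n) :
  (forall t, step w (r t) (lab t) (r t.+1)) ->
  forall i T, uninst (loc (r T) i) ->
  (forall t', (T <= t')%N -> cview (loc (r t') i) = cview (loc (r T) i)) ->
  forall t', (T <= t')%N -> uninst (loc (r t') i).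
Proof.
move=> Hst i T HU Hc t' /subnKC <-; elim: (t' - T)%N => [|d IH]; first by rewrite addn0.
rewrite addnS.
have [_ _ A _ _] := @step_loc _ _ _ _ _ _ _ i (Hst (T + d)%N).
apply: A => //.
by rewrite !Hc // ?leq_addr // -addnS leq_addr.
Qed.

Lemma lex_total {Val : Type} (x y : regst Val) : lex_le x y || lex_le y x.
Proof.
rewrite /lex_le; case: (ltngtP x.1.2 y.1.2) => //= _.
exact: leq_total.
Qed.

Lemma lex_trans {Val : Type} (x y z : regst Val) : lex_le x y -> lex_le y z -> lex_le x z.
Proof.
rewrite /lex_le => /orP [H1|/andP [/eqP H1 H1']] /orP [H2|/andP [/eqP H2 H2']].
- by rewrite (ltn_trans H1 H2).
- by rewrite -H2 H1.
- by rewrite H1 H2.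
- by rewrite H1 H2 eqxx (leq_trans H1' H2') orbT.
Qed.

Lemma max_exists (Val : Type) (n : nat) (P : 'I_n -> regst Val -> Prop) (l : seq 'I_n) :
  l != [::] -> (forall i, i \in l -> exists y, P i y) ->
  (forall i y y', i \in l -> P i y -> P i y' -> y = y') ->
  exists x, (exists i, i \in l /\ P i x) /\ forall i y, i \in l -> P i y -> lex_le y x.
Proof.
elim: l => [//|i l IH] _ Hex Hun.
have [yi Hyi] := Hex i (mem_head _ _).
case: (altP (l =P [::])) => [El|Nl].
  subst l; exists yi; split; first by exists i; rewrite mem_head.
  move=> j y; rewrite mem_seq1 => /eqP -> Hy.
  rewrite (Hun i y yi (mem_head _ _) Hy Hyi).
  by rewrite /lex_le ltnn eqxx leqnn orbT.
have [x [[j [Hj Hx]] Hmax]] := IH Nl (fun j Hj => Hex j ltac:(by rewrite inE Hj orbT))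
   (fun j y y' Hj => Hun j y y' ltac:(by rewrite inE Hj orbT)).
case/orP: (lex_total (Val:=Val) yi x) => Hc.
- exists x; split; first by exists j; rewrite inE Hj orbT.
  move=> k y; rewrite inE => /orP [/eqP ->|Hk] Hy; last exact: Hmax Hy.
  by rewrite (Hun i y yi (mem_head _ _) Hy Hyi).
- exists yi; split; first by exists i; rewrite mem_head.
  move=> k y; rewrite inE => /orP [/eqP ->|Hk] Hy.
    rewrite (Hun i y yi (mem_head _ _) Hy Hyi).
    by rewrite /lex_le ltnn eqxx leqnn orbT.
  exact: (@lex_trans Val _ _ _ (Hmax _ _ Hk Hy) Hc).
Qed.

Lemma en_uninst (R : realFieldType) (Val : Type) (n : nat) (w : nat -> 'I_n -> R)
  (g : gstate Val R n) q p :
  ~~ crashed (loc g q) -> ~~ uninst (loc g q) ->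
  rcvd g q p (ChangeView (cview (loc g q)).+1) -> enabled w g (Uninstall q).
Proof.
move=> Hc Hu Hr; eexists => /=; split => //; split => //; split; last by reflexivity.
by right; exists p.
Qed.

Lemma en_install (R : realFieldType) (Val : Type) (n : nat) (w : nat -> 'I_n -> R)
  (g : gstate Val R n) q (Q : {set 'I_n}) :
  Inv w g -> ~~ crashed (loc g q) -> uninst (loc g q) ->
  (forall i, i \in Q -> exists y, rcvd g q i (StateUpdate y (cview (loc g q)) (w (cview (loc g q)) i))) ->
  n%:R / 2 < \sum_(i in Q) w (cview (loc g q)) i ->
  enabled w g (Install q).
Proof.
move=> [_ [_ [_ [_ [_ [H6 H7]]]]]] Hc Hu Hrc Hmaj.
set c := cview (loc g q).
have NQ : enum Q != [::].
  apply/eqP => E; move: Hmaj.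
  have -> : Q = set0 by apply/setP => i; rewrite -mem_enum E inE.
  rewrite big_set0 => H.
  have : (0 : R) <= n%:R / 2 by rewrite divr_ge0 ?ler0n.
  by rewrite leNgt H.
have [x [[j [Hj Hx]] Hmax]] := @max_exists Val n
  (fun i y => rcvd g q i (StateUpdate y c (w c i))) (enum Q) NQ
  (fun i Hi => Hrc i ltac:(by rewrite -mem_enum))
  (fun i y y' _ Hy Hy' => H6 _ _ _ _ _ _ _ _ (H7 _ _ _ Hy) (H7 _ _ _ Hy')).
eexists => /=; split => //; split => //.
exists Q, (w c), x; split; first exact: Hrc.
split; first exact: Hmaj.
split; first by exists j; rewrite -mem_enum.
split; last by reflexivity.
by move=> i y Hi Hy; apply: Hmax Hy; rewrite mem_enum.
Qed.

Lemma reach_uninst (R : realFieldType) (Val : Type) (n : nat) (w : nat -> 'I_n -> R)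
  (r : nat -> gstate Val R n) (lab : nat -> label n) :
  (forall t, step w (r t) (lab t) (r t.+1)) ->
  (forall s, correct r s -> forall t,
     (forall t', (t <= t')%N -> enabled w (r t') (Uninstall s)) ->
     exists t', (t <= t')%N /\ lab t' = Uninstall s) ->
  forall q k p T, correct r q -> (k <= cview (loc (r T) q))%N ->
  rcvd (r T) q p (ChangeView k.+1) ->
  exists T', (T <= T')%N /\ past (loc (r T') q) k.
Proof.
move=> Hst Hfair q k p T Hq HkT HrT.
apply: NNPP => Hn.
have Hnp : forall T', (T <= T')%N -> ~ past (loc (r T') q) k.
  by move=> T' HT' Hp; apply: Hn; exists T'.
have Hcv : forall T', (T <= T')%N -> cview (loc (r T') q) = k /\ ~~ uninst (loc (r T') q).
  move=> T' HT'.
  have [A _ _ _] := @run_mono _ _ _ _ _ _ Hst q _ _ HT'.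
  case: (ltngtP k (cview (loc (r T') q))) => Hc.
  - by case: (Hnp T' HT'); left.
  - by move: (leq_trans HkT A); rewrite leqNgt Hc.
  - split => //; apply/negP => Hu; apply: (Hnp T' HT'); by right.
have [T'' [HT'' Hl]] := Hfair q Hq T (fun T' HT' =>
  let: conj Hc Hu := Hcv T' HT' in
  @en_uninst _ _ _ w (r T') q p (Hq T') Hu
    ltac:(rewrite Hc; have [_ _ A _] := @run_mono _ _ _ _ _ _ Hst q _ _ HT'; exact: A)).
have := Hst T''; rewrite Hl /= => -[_ [_ [_ Heq]]].
apply: (Hnp T''.+1 (leqW HT'')); right.
rewrite Heq /= upd_locE eqxx /=.
by split => //; case: (Hcv T'' HT'').
Qed.

Lemma reach_install (R : realFieldType) (Val : Type) (n : nat) (w : nat -> 'I_n -> R)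
  (r : nat -> gstate Val R n) (lab : nat -> label n) :
  (forall t, step w (r t) (lab t) (r t.+1)) ->
  (forall t, Inv w (r t)) ->
  (forall s, correct r s -> forall t,
     (forall t', (t <= t')%N -> enabled w (r t') (Install s)) ->
     exists t', (t <= t')%N /\ lab t' = Install s) ->
  forall q k T (Q : {set 'I_n}), correct r q -> past (loc (r T) q) k ->
  (forall i, i \in Q -> exists y, rcvd (r T) q i (StateUpdate y k (w k i))) ->
  n%:R / 2 < \sum_(i in Q) w k i ->
  exists T', (T <= T')%N /\ (k < cview (loc (r T') q))%N.
Proof.
move=> Hst Hinv Hfair q k T Q Hq HpT HQ Hmaj.
apply: NNPP => Hn.
have Hle : forall T', (T <= T')%N -> (cview (loc (r T') q) <= k)%N.
  by move=> T' HT'; rewrite leqNgt; apply/negP => Hc; apply: Hn; exists T'.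
have [Hk HuT] : cview (loc (r T) q) = k /\ uninst (loc (r T) q).
  case: HpT => [Hc|[-> ->] //].
  by move: (Hle T (leqnn T)); rewrite leqNgt Hc.
have Hcv : forall T', (T <= T')%N -> cview (loc (r T') q) = k.
  move=> T' HT'; apply/eqP; rewrite eqn_leq Hle //=.
  have [A _ _ _] := @run_mono _ _ _ _ _ _ Hst q _ _ HT'.
  by rewrite -Hk.
have Hu : forall T', (T <= T')%N -> uninst (loc (r T') q).
  apply: (@run_uninst _ _ _ _ _ _ Hst q T HuT).
  by move=> T' HT'; rewrite Hcv // Hk.
have [T'' [HT'' Hl]] := Hfair q Hq T (fun T' HT' =>
  @en_install _ _ _ w (r T') q Q (Hinv T') (Hq T') (Hu T' HT')
   ltac:(rewrite Hcv //; move=> i Hi; have [y Hy] := HQ i Hi;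
         have [_ _ A _] := @run_mono _ _ _ _ _ _ Hst q _ _ HT'; exists y; exact: A)
   ltac:(by rewrite Hcv)).
have := Hst T''; rewrite Hl /= => -[_ [_ [Q' [ws [x [_ [_ [_ [_ Heq]]]]]]]]].
apply: Hn; exists T''.+1; split; first exact: leqW.
by rewrite Heq /= upd_locE eqxx /= Hcv.
Qed.

Definition pb (P : Prop) : bool := if excluded_middle_informative P then true else false.

Lemma pbP (P : Prop) : pb P <-> P.
Proof. by rewrite /pb; case: excluded_middle_informative. Qed.

Lemma fin_common (n : nat) (C : 'I_n -> Prop) (P : 'I_n -> nat -> Prop) :
  (forall i T T', (T <= T')%N -> P i T -> P i T') ->
  (forall i, C i -> exists T, P i T) -> exists T, forall i, C i -> P i T.
Proof.
move=> Hm Hex.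
suff [T HT] : exists T, forall i, i \in enum 'I_n -> C i -> P i T.
  by exists T => i; apply: HT; rewrite mem_enum.
elim: (enum 'I_n) => [|i l [T0 HT0]]; first by exists 0%N.
case: (classic (C i)) => Hi.
- have [Ti HTi] := Hex i Hi.
  exists (maxn T0 Ti) => j; rewrite inE => /orP [/eqP ->|Hj] Hc.
    by apply: Hm HTi; rewrite leq_maxr.
  by apply: Hm (HT0 j Hj Hc); rewrite leq_maxl.
- exists T0 => j; rewrite inE => /orP [/eqP ->|Hj] Hc //.
  exact: HT0.
Qed.

Lemma maj (R : realFieldType) (n f : nat) (w : nat -> 'I_n -> R) :
  (2 * f + 1 <= n)%N -> weights_ok f w ->
  forall k (Q : {set 'I_n}), (n - f <= #|Q|)%N -> n%:R / 2 < \sum_(i in Q) w k i.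
Proof.
move=> Hnf [Hw _] k Q HQ.
have HQ0 : (0 < #|Q|)%N by apply: leq_trans HQ; rewrite subn_gt0; lia.
have [i0 Hi0] := card_gt0P HQ0.
have Hlt : \sum_(i in Q) (n%:R : R) < \sum_(i in Q) (w k i * (2 * (n - f))%:R).
  apply: ltr_sum; first by apply/hasP; exists i0; rewrite ?mem_index_enum.
  by move=> i _; case: (Hw k i).
rewrite sumr_const -mulr_suml -mulr_natr natrM in Hlt.
have HN : (0 : R) < (n - f)%:R by rewrite ltr0n subn_gt0; lia.
have Hc : ((n * (n - f))%:R : R) <= (n * #|Q|)%:R by rewrite ler_nat leq_mul2l HQ orbT.
rewrite !natrM in Hc.
set S := \sum_(i in Q) w k i in Hlt *.
have Hn0 : (0 : R) <= n%:R by [].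
nra.
Qed.

Theorem lemma5 (R : realFieldType) (Val : Type) (val0 : Val) (n f : nat)
  (w : nat -> 'I_n -> R)
  (Hnf : (2 * f + 1 <= n)%N)
  (Hw : weights_ok f w)
  (r : nat -> gstate Val R n) (lab : nat -> label n)
  (Hrun : admissible_run val0 f w r lab)
  (t : nat) (s : 'I_n) (v : nat)
  (Hlast : lastview_is (r t) v)
  (Hs : correct r s)
  (Hreq : requests r lab t s v) :
  exists Q : {set 'I_n},
    s \in Q /\ (forall i, i \in Q -> correct r i) /\
    weighted_majority w v Q /\
    (forall i, i \in Q -> exists t', (t <= t')%N /\ cview (loc (r t') i) = v.+1).
Proof.
case: Hrun => [H0 [Hst [Hcr [Hrel [Hfu Hfi]]]]].
have Hinv := @run_inv _ _ _ _ _ _ _ H0 Hst.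
pose Qc := [set i | pb (correct r i)].
have HQc : forall i, i \in Qc <-> correct r i by move=> i; rewrite inE; apply: pbP.
have Hcard : (n - f <= #|Qc|)%N.
  have [T HT] := @fin_common n (fun i => ~ correct r i)
     (fun i T => crashed (loc (r T) i))
     (fun i T T' HTT' => let: And4 _ A _ _ := @run_mono _ _ _ _ _ _ Hst i _ _ HTT' in A)
     (fun i Hi => ltac:(have [T HT] := not_all_ex_not _ _ Hi; exists T; exact: negbNE (introN idP HT))).
  have Hsub : ~: Qc \subset [set i | crashed (loc (r T) i)].
    apply/subsetP => i; rewrite !inE => Hi; apply: HT => Hc.
    by move/negP: Hi; apply; apply/pbP.
  have := subset_leq_card Hsub; have := Hcr T; have := cardsC Qc; rewrite card_ord.
  lia.
have Hmaj : forall k, n%:R / 2 < \sum_(i in Qc) w k i by move=> k; exact: (@maj _ _ _ _ Hnf Hw k Qc Hcard).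
have [[j Hj] Hle] := Hlast.
case: Hreq => Hlab Hsv.
have Main : forall k, (k <= v.+1)%N -> forall q, correct r q ->
    exists T, (k <= cview (loc (r T) q))%N.
  elim=> [|k IH] Hk q Hq; first by exists 0%N.
  have IHk := IH (ltnW Hk).
  have [p [T0 HT0]] : exists p T0, forall q, net (r T0) p q (ChangeView k.+1).
    case: (ltngtP k v) => Hkv.
    - have [_ [H2 [_ [H4 _]]]] := Hinv t.
      exists j, t; apply: H4; apply: H2; by rewrite Hj.
    - by move: Hk; rewrite ltnS leqNgt Hkv.
    - have := Hst t; rewrite Hlab /= => -[_ [_ Heq]].
      exists s, t.+1 => q'; rewrite Heq /=; right; split => //.
      by rewrite Hsv Hkv.
  have Hpast : forall i, correct r i -> exists T, past (loc (r T) i) k.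
    move=> i Hi.
    have [T1 HT1] := Hrel T0 p i _ Hi (HT0 i).
    have [T2 HT2] := IHk i Hi.
    have [A _ _ _] := @run_mono _ _ _ _ _ _ Hst i _ _ (leq_maxr T1 T2).
    have [_ _ B _] := @run_mono _ _ _ _ _ _ Hst i _ _ (leq_maxl T1 T2).
    have [T' [_ HP]] := @reach_uninst _ _ _ _ _ _ Hst Hfu _ _ _ _ Hi (leq_trans HT2 A) (B _ _ _ HT1).
    by exists T'.
  have Hrc : forall i, correct r i -> exists T, exists y, rcvd (r T) q i (StateUpdate y k (w k i)).
    move=> i Hi; have [T HT] := Hpast i Hi.
    have [H1 _] := Hinv T.
    have [y Hy] := H1 i k HT.
    have [T' HT'] := Hrel T i q _ Hq (Hy q).
    by exists T', y.
  have [Tc HTc] := @fin_common n (correct r)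
     (fun i T => exists y, rcvd (r T) q i (StateUpdate y k (w k i)))
     (fun i T T' HTT' => ltac:(move=> [y Hy]; exists y;
          have [_ _ A _] := @run_mono _ _ _ _ _ _ Hst q _ _ HTT'; exact: A))
     Hrc.
  have [Tq HTq] := Hpast q Hq.
  have HpT := @run_past _ _ _ _ _ _ Hst _ _ _ _ (leq_maxr Tc Tq) HTq.
  have [T' [_ HT']] := @reach_install _ _ _ _ _ _ Hst Hinv Hfi _ _ _ Qc Hq HpT
     (fun i Hi => ltac:(have [y Hy] := HTc i (proj1 (HQc i) Hi); exists y;
          have [_ _ A _] := @run_mono _ _ _ _ _ _ Hst q _ _ (leq_maxl Tc Tq); exact: A))
     (Hmaj k).
  by exists T'.
exists Qc; split; first by apply (proj2 (HQc s)).
split; first by move=> i Hi; apply (proj1 (HQc i) Hi).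
split; first exact: Hmaj.
move=> i /(proj1 (HQc i)) Hi.
have [T HT] := Main v.+1 (leqnn _) i Hi.
exact: (@run_hit _ _ _ _ _ _ Hst i v t T (Hle i) HT).
Qed.
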